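(* Consider the noisy search problem in the context, and suppose every query is a discrete interval, $S_n\in\mathcal{I}$ for $n=1,\dots,t$, with uniform prior $\pi_i(0)=\delta$. Then the posterior $\pi(t)$ is piecewise constant on at most $2t+1$ intervals: there exist $k\le 2t+1$ pairwise disjoint sets $J_1,\dots,J_k\in\mathcal{I}$ with $\bigcup_u J_u=\{1,\dots,1/\delta\}$ such that $$\pi_i(t)=\sum_{u=1}^{k}\frac{\pi_{J_u}(t)}{|J_u|}\mathbb{1}_{J_u}(i)\quad\text{for all } i.$$
   Context: Search problem: fix $\delta\in(0,1)$ with $N=1/\delta$ an integer. A target index $\theta$ is uniform on $\{1,\dots,N\}$. A noise profile $p:(0,1)\to(0,1/2)$ is continuous and non-decreasing. At each time $n$ a query set $S_n\subseteq\{1,\dots,N\}$ is chosen as a function of past queries/observations and one observes $Y_n=\mathbb{1}(\theta\in S_n)\oplus Z_n$, where conditionally on $S_n$, $Z_n\sim\mathrm{Bern}(p(\delta|S_n|))$, conditionally i.i.d. across time. The posterior is $\pi_i(t)=\mathbb{P}(\theta=i\mid S_1^t,Y_1^t)$, and $\pi_S=\sum_{i\in S}\pi_i$. $\mathcal{I}=\{\{i:a\le i\le b\}:1\le a\le b\le N\}$ is the collection of discrete intervals. *)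

(* Defs.v *)
From HB Require Import structures.
From mathcomp Require Import all_boot all_order all_algebra.
From mathcomp Require Import all_classical all_reals all_analysis.
Set Implicit Arguments. Unset Strict Implicit. Unset Printing Implicit Defensive.
Import Order.TTheory GRing.Theory Num.Theory.
Local Open Scope ring_scope.

(* Indices 1..N are represented by ordinals 'I_N = {0,..,N-1} (shift by one). *)

Definition is_dinterval (N : nat) (J : {set 'I_N}) : Prop :=
  exists a b : nat, (a <= b)%N /\ (b < N)%N /\ J = [set i : 'I_N | (a <= i <= b)%N].

(* A deterministic adaptive policy: the query at time n+1 is a function of the
   past observations Y_1..Y_n (past queries are themselves determined by them). *)
Definition policy (N : nat) := seq bool -> {set 'I_N}.

Section Search.
Variables (R : realType) (N : nat) (delta : R) (p : R -> R).

(* P(Y = b | theta = i, S) where Y = 1(theta in S) xor Z, Z ~ Bern(p(delta |S|)) *)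
Definition lik (S : {set 'I_N}) (b : bool) (i : 'I_N) : R :=
  let q := p (delta * #|S|%:R) in
  if (i \in S) == b then 1 - q else q.

(* joint probability P(theta = i, Y_1^t = y), t = size y, uniform prior delta *)
Definition joint (pol : policy N) (y : seq bool) (i : 'I_N) : R :=
  delta * \prod_(n < size y) lik (pol (take n y)) (nth false y n) i.

Definition posterior (pol : policy N) (y : seq bool) (i : 'I_N) : R :=
  joint pol y i / \sum_(j : 'I_N) joint pol y j.

Definition post_mass (pol : policy N) (y : seq bool) (S : {set 'I_N}) : R :=
  \sum_(i in S) posterior pol y i.

End Search.

(* Main.v *)
Require Import Defs.
From HB Require Import structures.
From mathcomp Require Import all_boot all_order all_algebra.
From mathcomp Require Import all_classical all_reals all_analysis.
From mathcomp Require Import zify.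
Import Order.TTheory GRing.Theory Num.Theory.
Import numFieldNormedType.Exports.

Fixpoint cntf {T : eqType} (h : nat -> T) (i : nat) : nat :=
  if i is j.+1 then (cntf h j + (h j.+1 != h j))%N else 0%N.

Lemma cntf_mono {T : eqType} (h : nat -> T) i j : (i <= j)%N -> (cntf h i <= cntf h j)%N.
Proof.
elim: j => [|j IH]; first by rewrite leqn0 => /eqP->.
rewrite leq_eqVlt ltnS => /predU1P[->//|/IH H] /=.
exact: leq_trans H (leq_addr _ _).
Qed.

Lemma cntf_step {T : eqType} (h : nat -> T) i : (cntf h i.+1 <= (cntf h i).+1)%N.
Proof. by rewrite /=; case: (_ != _); rewrite ?addn0 ?addn1. Qed.

Lemma cntf_const {T : eqType} (h : nat -> T) x d :
  cntf h (x + d) = cntf h x -> h (x + d) = h x.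
Proof.
elim: d => [|d IH]; first by rewrite addn0 => _.
have m1 := cntf_mono h _ _ (leq_addr d x).
rewrite addnS /=; case: eqP => [-> | _] E.
  by apply: IH; lia.
lia.
Qed.

Lemma cnt_interval N' (a b : nat) (hab : (a <= b)%N) (S : {set 'I_N'.+1})
  (hS : S = [set i : 'I_N'.+1 | (a <= i <= b)%N]) i : (i <= N')%N ->
  cntf (fun j => (inord j : 'I_N'.+1) \in S) i = (((0 < a) && (a <= i)) + (b < i))%N.
Proof.
elim: i => [|i IH] hi /=; first by case: a {hab hS} => [|a]; rewrite /= ?andbF ?leqn0.
rewrite IH ?(ltnW hi) // hS !inE !inordK // ?ltnS ?(ltnW hi) //.
case: (ltngtP a i.+1); case: (ltngtP b i); case: (ltngtP 0 a); move=> /= *; lia.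
Qed.

Local Open Scope ring_scope.

Theorem lemma1 (R : realType) (N : nat) (delta : R) (p : R -> R)
  (hN : (0 < N)%N) (hdelta : delta = (N%:R)^-1)
  (hp_cont : {within `]0, 1[%classic, continuous p}%classic)
  (hp_mono : forall x y : R, 0 < x < 1 -> 0 < y < 1 -> x <= y -> p x <= p y)
  (hp_range : forall x : R, 0 < x < 1 -> 0 < p x < 2^-1)
  (pol : policy N) (y : seq bool)
  (hint : forall n : nat, (n < size y)%N -> is_dinterval (pol (take n y))) :
  exists (k : nat) (J : 'I_k -> {set 'I_N}),
    (k <= (size y).*2.+1)%N /\
    (forall u, is_dinterval (J u)) /\
    (forall u v, u != v -> [disjoint J u & J v]) /\
    (\bigcup_(u < k) J u = [set: 'I_N]) /\
    (forall i : 'I_N,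
        posterior delta p pol y i =
        \sum_(u < k) post_mass delta p pol y (J u) / (#|J u|%:R)
                     * (if i \in J u then 1 else 0)).
Proof.
destruct N as [|N']; first by [].
set t := size y.
set jnt := fun j : nat => joint delta p pol y (inord j : 'I_N'.+1).
set mb := fun n j => (inord j : 'I_N'.+1) \in pol (take n y).
have jntE : forall x : 'I_N'.+1, joint delta p pol y x = jnt x.
  by move=> x; rewrite /jnt inord_val.
have chg : forall j, (forall n, (n < t)%N -> mb n j.+1 = mb n j) -> jnt j.+1 = jnt j.
  move=> j H; rewrite /jnt /joint; congr (_ * _); apply: eq_bigr => n _.
  by rewrite /lik; have := H n (ltn_ord n); rewrite /mb => ->.
have bound : forall i, (cntf jnt i <= \sum_(n < t) cntf (mb n) i)%N.
  elim=> [|i IH] /=; first by [].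
  rewrite big_split /=; apply: leq_add => //.
  case: eqP => [_|Hne] //=.
  rewrite lt0n; apply/negP => /eqP H0; apply: Hne; apply: chg => n hn.
  have : (mb n i.+1 != mb n i) = 0%N :> nat.
    by move: H0; rewrite (bigD1 (Ordinal hn)) //= => /eqP; rewrite addn_eq0 => /andP[/eqP].
  by case: eqP.
have b2 : forall i, (i <= N')%N -> (\sum_(n < t) cntf (mb n) i <= t.*2)%N.
  move=> i hi; rewrite -muln2 -[t in (t * 2)%N]card_ord -sum_nat_const.
  apply: leq_sum => n _.
  have [a [b [hab [hb hS]]]] := hint n (ltn_ord n).
  by rewrite /mb (cnt_interval _ _ _ hab _ hS _ hi); case: (_ && _); case: (_ < _)%N.
set idx := cntf jnt.
set m := idx N'.
exists m.+1, (fun u : 'I_m.+1 => [set x : 'I_N'.+1 | idx x == u]).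
split.
  by rewrite ltnS; exact: leq_trans (bound N') (b2 N' (leqnn _)).
have idxle : forall x : 'I_N'.+1, (idx x <= m)%N.
  by move=> x; apply: cntf_mono; rewrite -ltnS.
have const : forall x z : 'I_N'.+1, idx x = idx z -> jnt x = jnt z.
  move=> x z.
  wlog le : x z / (x <= z)%N.
    move=> H; case: (leqP x z) => [/H//|/ltnW/H h e].
    by symmetry; apply: h.
  move=> e; have := cntf_const jnt x (z - x); rewrite subnKC // => H.
  by symmetry; apply: H.
split.
  move=> u.
  have um : (u <= m)%N by rewrite -ltnS.
  have exA : exists i, (u <= idx i)%N by exists N'.
  case: (ex_minnP exA) => a ha hmin.
  have aN : (a <= N')%N := hmin N' um.
  have idxa : idx a = u.
    case: a ha hmin aN => [|a'] ha hmin aN.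
      by move: ha; rewrite /idx /= leqn0 => /eqP->.
    apply/eqP; rewrite eqn_leq ha andbT.
    have : ~~ (u <= idx a')%N by apply/negP => /hmin; rewrite ltnn.
    rewrite -ltnNge => lt.
    exact: leq_trans (cntf_step jnt a') lt.
  have exB : exists i, (i <= N')%N && (idx i <= u)%N.
    by exists a; rewrite aN idxa leqnn.
  have boundB : forall i, (i <= N')%N && (idx i <= u)%N -> (i <= N')%N.
    by move=> i /andP[].
  case: (ex_maxnP exB boundB) => b /andP[bN hb] hmax.
  have ab : (a <= b)%N by apply: hmax; rewrite aN idxa leqnn.
  have idxb : idx b = u.
    by apply/eqP; rewrite eqn_leq hb -{1}idxa cntf_mono.
  exists a, b; split => //; split; first by rewrite ltnS.
  apply/setP => x; rewrite !inE; apply/eqP/andP => [ex | [h1 h2]].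
    split; first by apply: hmin; rewrite ex.
    by apply: hmax; rewrite -ltnS ltn_ord ex leqnn.
  apply/anti_leq; apply/andP; split.
    by rewrite -idxb; apply: cntf_mono.
  by rewrite -idxa; apply: cntf_mono.
split.
  move=> u v huv; apply/pred0P => x /=; rewrite !inE; apply/negP => /andP[/eqP e1 /eqP e2].
  by move/eqP: huv; apply; apply: val_inj; rewrite /= -e1 -e2.
split.
  apply/setP => x; rewrite inE; apply/bigcupP.
  by exists (Ordinal (idxle x : (idx x < m.+1)%N)) => //; rewrite inE.
move=> i.
pose u0 := Ordinal (idxle i : (idx i < m.+1)%N).
rewrite (bigD1 u0) //= big1 ?addr0; last first.
  move=> u hu; rewrite inE; case: eqP => // e; last by rewrite mulr0.
  by move/eqP: hu; case; apply: val_inj; rewrite /= -e.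
rewrite inE eqxx mulr1 /post_mass.
rewrite (eq_bigr (fun=> posterior delta p pol y i)); last first.
  move=> x; rewrite inE => /eqP e.
  by rewrite /posterior (jntE x) (jntE i) (const x i).
rewrite sumr_const -(mulr_natr (posterior delta p pol y i)) mulfK // pnatr_eq0 -lt0n card_gt0.
by apply/set0Pn; exists i; rewrite inE.
Qed.
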